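(* Let $C$ be a configuration of a finite labeled prime event structure and let $e_1,e_2\in C$ be concurrent events. Then $T(C)=T(C_{e_1<e_2})\cup T(C_{e_2<e_1})$ and $T(C_{e_1<e_2})\cap T(C_{e_2<e_1})=\emptyset$.
   Context: A finite labeled prime event structure is $\langle E,<,\#,h\rangle$ with finite $E$, strict partial order $<$ (causality), labeling $h$, and symmetric irreflexive conflict relation $\#$ closed under $<$. A configuration is a left-closed, conflict-free subset of $E$. Events $e,e'$ are concurrent if $e\neq e'$, neither $e<e'$ nor $e'<e$, and not $e\#e'$. $T(C)$ is the set of traces of $C$: sequences in which every event of $C$ occurs exactly once and $e_i<e_j$ implies $i<j$. The split $C_{e_1<e_2}$ is the structure with event set $C$, causality $(<\cup\{(e_1,e_2)\})^+$ restricted to $C\times C$ ($^+$ denoting transitive closure), no conflicts, and labeling $h|_C$; $T(C_{e_1<e_2})$ is the set of sequences listing every event of $C$ exactly once and respecting this enlarged causality. *)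

(* Defs.v *)
From mathcomp Require Import all_boot.
From Stdlib Require Import Relations.
Set Implicit Arguments. Unset Strict Implicit. Unset Printing Implicit Defensive.

Definition is_pes (E : finType) (L : Type) (lt cf : rel E) (h : E -> L) : Prop :=
  (forall e, ~~ lt e e) /\
  (forall e1 e2 e3, lt e1 e2 -> lt e2 e3 -> lt e1 e3) /\
  (forall e, ~~ cf e e) /\
  (forall e1 e2, cf e1 e2 -> cf e2 e1) /\
  (forall e1 e2 e3, cf e1 e2 -> lt e2 e3 -> cf e1 e3).

Definition is_configuration (E : finType) (lt cf : rel E) (C : {set E}) : Prop :=
  (forall e e', e' \in C -> lt e e' -> e \in C) /\
  (forall e e', e \in C -> e' \in C -> ~~ cf e e').

Definition concurrent (E : finType) (lt cf : rel E) (e e' : E) : Prop :=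
  e <> e' /\ ~~ lt e e' /\ ~~ lt e' e /\ ~~ cf e e'.

Definition traces_rel (E : finType) (C : {set E}) (R : E -> E -> Prop)
  (s : seq E) : Prop :=
  uniq s /\ (forall x, (x \in s) = (x \in C)) /\
  (forall x y, x \in s -> y \in s -> R x y -> index x s < index y s).

Definition traces (E : finType) (lt : rel E) (C : {set E}) : seq E -> Prop :=
  traces_rel C (fun x y => lt x y).

Definition split_lt (E : finType) (lt : rel E) (C : {set E}) (e1 e2 : E)
  : E -> E -> Prop :=
  fun x y => x \in C /\ y \in C /\
    clos_trans E (fun a b => lt a b \/ (a = e1 /\ b = e2)) x y.

Definition split_traces (E : finType) (lt : rel E) (C : {set E}) (e1 e2 : E)
  : seq E -> Prop :=
  traces_rel C (split_lt lt C e1 e2).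

(* Main.v *)
Require Import Defs.
From mathcomp Require Import all_boot.
From Stdlib Require Import Relations.

Lemma ct_index (E : finType) (lt : rel E) (C : {set E}) (e1 e2 : E) (s : seq E) :
  (forall e e', e' \in C -> lt e e' -> e \in C) ->
  (forall x, (x \in s) = (x \in C)) ->
  (forall x y, x \in s -> y \in s -> lt x y -> index x s < index y s) ->
  e1 \in C -> index e1 s < index e2 s ->
  forall x y, clos_trans E (fun a b => lt a b \/ (a = e1 /\ b = e2)) x y ->
  y \in C -> x \in C /\ index x s < index y s.
Proof.
move=> Hcl Hs Hlt He1 Hi x y; elim=> {x y}.
- move=> a b [Hab|[-> ->]] Hb; last by split.
  have Ha := Hcl _ _ Hb Hab; split=> //; apply: Hlt=> //; by rewrite Hs.
- move=> a b c _ IH1 _ IH2 Hc.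
  have [Hb Hbc] := IH2 Hc. have [Ha Hab] := IH1 Hb.
  split=> //; exact: ltn_trans Hab Hbc.
Qed.

Theorem lemma11 (E : finType) (L : Type) (lt cf : rel E) (h : E -> L)
  (C : {set E}) (e1 e2 : E) :
  is_pes lt cf h ->
  is_configuration lt cf C ->
  e1 \in C -> e2 \in C ->
  concurrent lt cf e1 e2 ->
  (forall s : seq E,
     traces lt C s <-> (split_traces lt C e1 e2 s \/ split_traces lt C e2 e1 s)) /\
  (forall s : seq E,
     ~ (split_traces lt C e1 e2 s /\ split_traces lt C e2 e1 s)).
Proof.
move=> _ [Hcl _] He1 He2 [Hne _].
split.
- move=> s; split.
  + move=> [Hu [Hs Hlt]].
    have Hi1 : e1 \in s by rewrite Hs.
    have Hi2 : e2 \in s by rewrite Hs.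
    case: (ltngtP (index e1 s) (index e2 s)) => Hc.
    * left; split=> //; split=> // x y _ _ [_ [Hy Hxy]].
      by case: (@ct_index _ lt C e1 e2 s Hcl Hs Hlt He1 Hc x y Hxy Hy).
    * right; split=> //; split=> // x y _ _ [_ [Hy Hxy]].
      by case: (@ct_index _ lt C e2 e1 s Hcl Hs Hlt He2 Hc x y Hxy Hy).
    * exfalso; apply: Hne.
      by rewrite -(nth_index e1 Hi1) Hc nth_index.
  + case=> [[Hu [Hs Hlt]]|[Hu [Hs Hlt]]]; (split=> //; split=> // x y Hx Hy Hxy;
      apply: Hlt=> //; split; [by rewrite -Hs|split; [by rewrite -Hs|by apply: t_step; left]]).
- move=> s [[_ [Hs H1]] [_ [_ H2]]].
  have Hi1 : e1 \in s by rewrite Hs.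
  have Hi2 : e2 \in s by rewrite Hs.
  have A := H1 e1 e2 Hi1 Hi2 (conj He1 (conj He2 (t_step _ _ _ _ (or_intror (conj erefl erefl))))).
  have B := H2 e2 e1 Hi2 Hi1 (conj He2 (conj He1 (t_step _ _ _ _ (or_intror (conj erefl erefl))))).
  by move: (ltn_trans A B); rewrite ltnn.
Qed.
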